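(* Let $b\ge2$ be an integer and let $(q,q_1;q',q_1')$ be one of the fifteen quadruples $(3,1;3,1)$, $(3,1;3,2)$, $(3,2;3,2)$, $(3,2;4,3)$, $(3,1;4,3)$, $(3,2;4,1)$, $(3,1;4,1)$, $(3,2;5,4)$, $(3,2;5,3)$, $(3,1;5,4)$, $(3,2;5,2)$, $(3,1;5,3)$, $(3,2;5,1)$, $(3,1;5,2)$, $(3,1;5,1)$. Consider the configuration $\langle b;q,q_1;q',q_1'\rangle$ of smooth rational curves: a central curve $E_0$ with $E_0^2=-b$; a curve $E_1$ with $E_1^2=-2$; a chain $E_2,\dots,E_k$ with $E_i^2=-n_i$ where $[n_2,\dots,n_k]=q/q_1$; and a chain $E_{k+1},\dots,E_l$ with $E_i^2=-n_i$ where $[n_{k+1},\dots,n_l]=q'/q_1'$; $E_0$ meets each of $E_1,E_2,E_{k+1}$ transversally once, consecutive curves in each chain meet once, and there are no other intersections. Let $a_0,\dots,a_l$ be the discrepancies, i.e. the unique solution of $\sum_ja_jE_j\cdot E_i=2+E_i^2$ for all $i$. If not all $a_i$ are $0$ (i.e. the corresponding log terminal singularity of type $T_m$, $O_m$, or $I_m$ is not canonical), then $a_0+a_1\ge1$.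
   Context: $[m_1,\dots,m_r]$ denotes the Hirzebruch–Jung continued fraction $m_1-1/(m_2-1/(\cdots-1/m_r))$ with $m_i\ge2$; explicitly $3/1=[3]$, $3/2=[2,2]$, $4/3=[2,2,2]$, $4/1=[4]$, $5/4=[2,2,2,2]$, $5/3=[2,3]$, $5/2=[3,2]$, $5/1=[5]$. These configurations are exactly the minimal resolution graphs of log terminal singularities of types $T_m$ (first three quadruples), $O_m$ (next four) and $I_m$ (last eight). *)

(* Defs.v *)
From HB Require Import structures.
From mathcomp Require Import all_boot all_order all_algebra.
Set Implicit Arguments. Unset Strict Implicit. Unset Printing Implicit Defensive.
Import Order.TTheory GRing.Theory Num.Theory.
Local Open Scope ring_scope.

(* Hirzebruch-Jung continued fraction [m_1,...,m_r] = m_1 - 1/(m_2 - 1/(... - 1/m_r)).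
   (hjcf [::] = 0 is a dummy value; since 0^-1 = 0 in mathcomp, hjcf [:: m] = m.) *)
Fixpoint hjcf (s : seq nat) : rat :=
  match s with
  | [::] => 0
  | m :: s' => m%:R - (hjcf s')^-1
  end.

Definition quads : seq (nat * nat * nat * nat) :=
  [:: (3,1,3,1); (3,1,3,2); (3,2,3,2); (3,2,4,3); (3,1,4,3); (3,2,4,1);
      (3,1,4,1); (3,2,5,4); (3,2,5,3); (3,1,5,4); (3,2,5,2); (3,1,5,3);
      (3,2,5,1); (3,1,5,2); (3,1,5,1)]%N.

(* Configuration <b; ns; ns'> with curves E_0,...,E_l indexed by 0..l,
   k = 1 + size ns, l = k + size ns'.
   self-intersection numbers: E_0^2 = -b, E_1^2 = -2, E_i^2 = -n_i on the chains. *)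
Definition cfg_k (ns : seq nat) : nat := (1 + size ns)%N.
Definition cfg_l (ns ns' : seq nat) : nat := (cfg_k ns + size ns')%N.

Definition cfg_weights (b : nat) (ns ns' : seq nat) : seq nat :=
  [:: b; 2%N] ++ ns ++ ns'.

Definition cfg_adj_lt (ns ns' : seq nat) (i j : nat) : bool :=
  let k := cfg_k ns in let l := cfg_l ns ns' in
  [|| (i == 0%N) && (j == 1%N),
      (i == 0%N) && (j == 2%N),
      (i == 0%N) && (j == k.+1),
      [&& 2 <= i, j == i.+1 & j <= k]%N
    | [&& k.+1 <= i, j == i.+1 & j <= l]%N ].

Definition cfg_int (b : nat) (ns ns' : seq nat) (i j : nat) : rat :=
  if i == j then - (nth 0%N (cfg_weights b ns ns') i)%:R
  else if cfg_adj_lt ns ns' i j || cfg_adj_lt ns ns' j i then 1 else 0.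

Definition is_discrepancy (b : nat) (ns ns' : seq nat) (a : nat -> rat) : Prop :=
  forall i : nat, (i <= cfg_l ns ns')%N ->
    \sum_(j < (cfg_l ns ns').+1) a j * cfg_int b ns ns' j i
      = 2 + cfg_int b ns ns' i i.

(* Main.v *)
Require Import Defs.
From HB Require Import structures.
From mathcomp Require Import all_boot all_order all_algebra.
From mathcomp Require Import ring lra zify.
Import Order.TTheory GRing.Theory Num.Theory.
Local Open Scope ring_scope.
Lemma hjcf_gt1 s : all (fun n => 2 <= n)%N s -> s != [::] -> 1 < hjcf s.
Proof.
elim: s => [//|m s IH] /= /andP [Hm Ha] _.
have Hm' : (2:rat) <= m%:R by rewrite (ler_nat _ 2 m).
case: s IH Ha => [|m' s'] IH Ha /=.
  rewrite invr0 subr0; lra.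
have H1 := IH Ha isT. move: H1 => /=; set y := _ - _ => Hy.
have : y^-1 < 1 by rewrite invf_lt1 //; lra.
lra.
Qed.

Lemma hjcf_step m s x : (2 <= m)%N -> all (fun n => 2 <= n)%N s -> hjcf (m :: s) = x ->
  (m%:R < x + 1) /\ ((s = [::] /\ x = m%:R) \/
     (s != [::] /\ x < m%:R /\ hjcf s = (m%:R - x)^-1)).
Proof.
move=> Hm Ha /= <-.
case: s Ha => [|m' s'] Ha.
  split; first by rewrite /= invr0 subr0; lra.
  by left; rewrite /= invr0 subr0.
have Hy := hjcf_gt1 _ Ha isT.
move: Hy; set y := hjcf _ => Hy.
have Hi : 0 < y^-1 < 1 by rewrite invr_gt0 invf_lt1; lra.
split; first lra.
right; split=> //; split; first lra.
by rewrite opprB addrC subrK invrK.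
Qed.

Ltac killb H := (vm_compute in H; discriminate H).

Ltac dec H Ha Hne :=
  match type of H with hjcf ?s = ?x =>
    let m := fresh "m" in let t := fresh "t" in
    destruct s as [|m t];
    [ exfalso; move: Hne; rewrite eqxx; discriminate
    | let Hm := fresh "Hm" in let Ha2 := fresh "Ha" in
      move: Ha => /= /andP [Hm Ha2];
      let Hb := fresh "Hb" in let Hx := fresh "Hx" in let Hne2 := fresh "Hne" in
      let Hlt := fresh "Hlt" in let Hs := fresh "Hs" in let Ht := fresh "Ht" in
      let D := fresh "D" in destruct (@hjcf_step _ _ _ Hm Ha2 H) as [Hb D]; clear H;
      let Hm6 := fresh "Hm6" in (have Hm6 : (m < 6)%N by
         rewrite -(ltr_nat rat); apply: (lt_le_trans Hb); vm_compute; reflexivity);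
      destruct m as [|[|[|[|[|[|m]]]]]]; try discriminate Hm; try discriminate Hm6;
      (destruct D as [[Ht Hx]|[Hne2 [Hlt Hs]]];
      [ subst t; move/eqP: Hx => Hx; try killb Hx; clear Hx Hb Hm Hm6 Ha2 | try killb Hlt; try killb Hb; clear Hlt Hb Hm Hm6; dec Hs Ha2 Hne2 ]) ]
  end.


Ltac kill_i Hex := let i := fresh "i" in let Hi := fresh "Hi" in let Hai := fresh "Hai" in
  case: Hex => i [Hi Hai];
  do 10 (destruct i as [|i]; [first [discriminate Hi | exfalso; move/negP: Hai; apply; apply/eqP; lra]|]);
  discriminate Hi.

Ltac solve_sys Hd Hex :=
  rewrite /is_discrepancy /cfg_l /cfg_k /= ?addnE /= in Hd Hex;
  let e0 := fresh "e" in
  have e0 := Hd 0%N isT; rewrite !big_ord_recr big_ord0 /= /cfg_int /= in e0;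
  let e1 := fresh "e" in
  have e1 := Hd 1%N isT; rewrite !big_ord_recr big_ord0 /= /cfg_int /= in e1;
  let e2 := fresh "e" in
  have e2 := Hd 2%N isT; rewrite !big_ord_recr big_ord0 /= /cfg_int /= in e2;
  let e3 := fresh "e" in
  have e3 := Hd 3%N isT; rewrite !big_ord_recr big_ord0 /= /cfg_int /= in e3;
  try (let e4 := fresh "e" in
  have e4 := Hd 4%N isT; rewrite !big_ord_recr big_ord0 /= /cfg_int /= in e4);
  try (let e5 := fresh "e" in
  have e5 := Hd 5%N isT; rewrite !big_ord_recr big_ord0 /= /cfg_int /= in e5);
  try (let e6 := fresh "e" in
  have e6 := Hd 6%N isT; rewrite !big_ord_recr big_ord0 /= /cfg_int /= in e6);
  try (let e7 := fresh "e" in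
  have e7 := Hd 7%N isT; rewrite !big_ord_recr big_ord0 /= /cfg_int /= in e7);
  try (let e8 := fresh "e" in
  have e8 := Hd 8%N isT; rewrite !big_ord_recr big_ord0 /= /cfg_int /= in e8);
  try (let e9 := fresh "e" in
  have e9 := Hd 9%N isT; rewrite !big_ord_recr big_ord0 /= /cfg_int /= in e9);
  clear Hd.


Theorem proposition4p8 (b q q1 q' q1' : nat) (ns ns' : seq nat) (a : nat -> rat) :
  (2 <= b)%N ->
  (q, q1, q', q1') \in quads ->
  ns != [::] -> all (fun n => 2 <= n)%N ns -> hjcf ns = q%:R / q1%:R ->
  ns' != [::] -> all (fun n => 2 <= n)%N ns' -> hjcf ns' = q'%:R / q1'%:R ->
  is_discrepancy b ns ns' a ->
  (exists i : nat, (i <= cfg_l ns ns')%N /\ a i != 0) ->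
  1 <= a 0%N + a 1%N.
Proof.
move=> Hb Hq Hne Ha Hh Hne' Ha' Hh' Hd Hex.
move: Hq Hh Hh'; rewrite /quads.
repeat (rewrite in_cons => /orP [/eqP [-> -> -> ->] | ]).
all: try done.
all: move=> Hh Hh'.
all: dec Hh Ha Hne; dec Hh' Ha' Hne'.
all: case: b Hb Hd => [|[|[|b]]] // _ Hd; solve_sys Hd Hex.
all: first [ (have HB : 3%:R <= (b.+3)%:R :> rat by rewrite ler_nat);
              move: HB; set B := (b.+3)%:R => HB; nra
            | lra | kill_i Hex ].
Qed.
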